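(* Let $K$ be a kernel as below, $\mathbf{n}\in\mathbb{N}^d$, and suppose $\rho_{\mathbf{j}}(\mathbf{0})\ne0$ for all $\mathbf{j}\in\Omega_{\mathbf{n}}^*$. Then for every function $f:\mathbb{T}^d\to\mathbb{R}$ there is a unique sk-spline $s\in SK(\Lambda_{\mathbf{n}})$ satisfying $s(\mathbf{x}_{\mathbf{j}})=f(\mathbf{x}_{\mathbf{j}})$ for all $\mathbf{j}\in\Omega_{\mathbf{n}}$, and it is given by $$s(\mathbf{x})=sk_{\mathbf{n}}(f,\mathbf{x})=\sum_{\mathbf{k}\in\Omega_{\mathbf{n}}}f(\mathbf{x}_{\mathbf{k}})\,\widetilde{sk}_{\mathbf{n}}(\mathbf{x}-\mathbf{x}_{\mathbf{k}}),\qquad\mathbf{x}\in\mathbb{T}^d.$$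
   Context: $\mathbb{T}^d=(\mathbb{R}/2\pi\mathbb{Z})^d$. Kernel: $K(\mathbf{x})=\sum_{\mathbf{l}\in\mathbb{Z}^d}a_{\mathbf{l}}e^{i\mathbf{l}\cdot\mathbf{x}}$ with $(a_{\mathbf{l}})$ real, $a_{\mathbf{l}}=a_{-\mathbf{l}}$, $\sum_{\mathbf{l}}|a_{\mathbf{l}}|<\infty$. Notation: $\mathbf{x}\cdot\mathbf{y}=\sum_ix_iy_i$; fix $\mathbf{n}\in\mathbb{N}^d$, $\mathbf{x}_{\mathbf{k}}=(\pi k_1/n_1,\dots,\pi k_d/n_d)$ for $\mathbf{k}\in\mathbb{Z}^d$, $\Omega_{\mathbf{n}}=\{\mathbf{j}\in\mathbb{Z}^d:0\le j_l\le 2n_l-1\}$, $\Omega_{\mathbf{n}}^*=\Omega_{\mathbf{n}}\setminus\{\mathbf{0}\}$, $\Lambda_{\mathbf{n}}=\{\mathbf{x}_{\mathbf{k}}:\mathbf{k}\in\Omega_{\mathbf{n}}\}$, $N=2^dn_1\cdots n_d$. For $\mathbf{j}\in\mathbb{Z}^d$: $\rho_{\mathbf{j}}(\mathbf{x})=\frac{2}{N}\sum_{\mathbf{k}\in\Omega_{\mathbf{n}}}\cos(\mathbf{j}\cdot\mathbf{x}_{\mathbf{k}})K(\mathbf{x}-\mathbf{x}_{\mathbf{k}})$. An sk-spline on $\Lambda_{\mathbf{n}}$ (associated with $K$) is a function $s(\mathbf{x})=c+\sum_{\mathbf{k}\in\Omega_{\mathbf{n}}}c_{\mathbf{k}}K(\mathbf{x}-\mathbf{x}_{\mathbf{k}})$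 with $c,c_{\mathbf{k}}\in\mathbb{R}$ and $\sum_{\mathbf{k}\in\Omega_{\mathbf{n}}}c_{\mathbf{k}}=0$; $SK(\Lambda_{\mathbf{n}})$ is the real vector space of these. The fundamental sk-spline is $\widetilde{sk}_{\mathbf{n}}(\mathbf{x})=\frac1N+\frac1N\sum_{\mathbf{j}\in\Omega_{\mathbf{n}}^*}\frac{\rho_{\mathbf{j}}(\mathbf{x})}{\rho_{\mathbf{j}}(\mathbf{0})}$. *)

(* Defs.v *)
From Stdlib Require Import Reals ZArith.
From mathcomp Require Import all_boot.
Set Implicit Arguments. Unset Strict Implicit. Unset Printing Implicit Defensive.

Local Open Scope R_scope.

Notation "\rsum_ ( i | P ) F" := (\big[Rplus/R0]_(i | P) F) (at level 41, F at level 41, i at level 50).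
Notation "\rsum_ ( i < d ) F" := (\big[Rplus/R0]_(i < d) F) (at level 41, F at level 41, i, d at level 50).

(* points of R^d (representatives of points of T^d) *)
Definition pt (d : nat) := 'I_d -> R.
Definition ptsub d (x y : pt d) : pt d := fun i => x i - y i.
Definition pt0 d : pt d := fun _ => 0.
Definition dotR d (x y : pt d) : R := \rsum_(i < d) (x i * y i).
Definition dotZ d (l : 'I_d -> Z) (x : pt d) : R := \rsum_(i < d) (IZR (l i) * x i).
Definition dotN d (j : 'I_d -> nat) (x : pt d) : R := \rsum_(i < d) (INR (j i) * x i).

Definition box_idx d (M : nat) (t : {ffun 'I_d -> 'I_(2 * M + 1)}) : 'I_d -> Z :=
  fun i => (Z.of_nat (nat_of_ord (t i)) - Z.of_nat M)%Z.
Definition boxsum d (M : nat) (F : ('I_d -> Z) -> R) : R :=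
  \big[Rplus/R0]_(t : {ffun 'I_d -> 'I_(2 * M + 1)}) F (@box_idx d M t).

(* K(x) = sum_{l in Z^d} a_l e^{i l.x}, with (a_l) real, a_l = a_{-l},
   sum |a_l| < oo.  Absolute summability is expressed by boundedness of the
   (nonnegative) partial sums over the boxes [-M,M]^d; the (then unconditionally
   convergent) sum is the limit of the symmetric box partial sums.  Since a is
   real and even, each symmetric box partial sum of a_l e^{i l.x} equals the
   real number sum a_l cos(l.x). *)
Definition is_kernel d (a : ('I_d -> Z) -> R) (K : pt d -> R) : Prop :=
  (forall l, a l = a (fun i => (- l i)%Z)) /\
  (exists B, forall M, boxsum M (fun l => Rabs (a l)) <= B) /\
  (forall x, Un_cv (fun M => boxsum M (fun l => a l * cos (dotZ l x))) (K x)).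

Section Grid.
Variables (d : nat) (n : 'I_d -> nat).

(* ambient bound for indices: every k in Omega_n has k_i < 2 n_i <= Mb *)
Definition Mb : nat := (2 * \max_(i < d) n i)%N.
Definition idx := {ffun 'I_d -> 'I_Mb}.
Definition idxN (k : idx) : 'I_d -> nat := fun i => nat_of_ord (k i).

Definition in_Omega (k : idx) : bool := [forall i, (k i < 2 * n i)%N].
Definition in_Omega_star (k : idx) : bool := in_Omega k && [exists i, (nat_of_ord (k i) != 0)%N].

Definition sumOmega (F : idx -> R) : R := \rsum_(k | in_Omega k) F k.
Definition sumOmega_star (F : idx -> R) : R := \rsum_(k | in_Omega_star k) F k.

Definition xk (k : 'I_d -> nat) : pt d := fun i => PI * INR (k i) / INR (n i).
Definition xg (k : idx) : pt d := xk (idxN k).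

Definition Nn : R := INR (2 ^ d * \prod_(i < d) n i)%N.

Variable K : pt d -> R.

Definition rho (j : 'I_d -> nat) (x : pt d) : R :=
  2 / Nn * sumOmega (fun k => cos (dotN j (xg k)) * K (ptsub x (xg k))).

Definition is_sk_spline (s : pt d -> R) : Prop :=
  exists (c : R) (ck : idx -> R),
    sumOmega ck = 0 /\
    forall x, s x = c + sumOmega (fun k => ck k * K (ptsub x (xg k))).

Definition sk_fund (x : pt d) : R :=
  1 / Nn + 1 / Nn * sumOmega_star (fun j => rho (idxN j) x / rho (idxN j) (@pt0 d)).

Definition sk_interp (f : pt d -> R) (x : pt d) : R :=
  sumOmega (fun k => f (xg k) * sk_fund (ptsub x (xg k))).

End Grid.

(* Main.v *)
Require Import Defs.
From Stdlib Require Import Reals ZArith Lra Lia FunctionalExtensionality.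
From HB Require Import structures.
From mathcomp Require Import all_boot.
From mathcomp Require Import zify.
Set Implicit Arguments. Unset Strict Implicit. Unset Printing Implicit Defensive.
Local Open Scope R_scope.

Lemma Rplus_0_l' : left_id R0 Rplus. Proof. move=> x; exact: Rplus_0_l. Qed.
Lemma Rplus_0_r' : right_id R0 Rplus. Proof. move=> x; exact: Rplus_0_r. Qed.
Lemma Rplus_assoc' : associative Rplus. Proof. move=> x y z; by rewrite Rplus_assoc. Qed.
Lemma Rplus_comm' : commutative Rplus. Proof. move=> x y; exact: Rplus_comm. Qed.
HB.instance Definition _ := Monoid.isComLaw.Build R R0 Rplus Rplus_assoc' Rplus_comm' Rplus_0_l'.

Section Sums.
Variable I : finType.
Implicit Types (P : pred I) (F G : I -> R).

Lemma rsum_add P F G : \big[Rplus/R0]_(i | P i) (F i + G i) = \big[Rplus/R0]_(i | P i) F i + \big[Rplus/R0]_(i | P i) G i.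
Proof. exact: big_split. Qed.

Lemma rsum_scal P F c : \big[Rplus/R0]_(i | P i) (c * F i) = c * \big[Rplus/R0]_(i | P i) F i.
Proof. apply: (big_rec2 (fun a b => a = c * b)); first by rewrite Rmult_0_r.
move=> i a b _ ->; ring. Qed.

Lemma rsum_opp P F : \big[Rplus/R0]_(i | P i) (- F i) = - \big[Rplus/R0]_(i | P i) F i.
Proof. apply: (big_rec2 (fun a b => a = - b)); first by rewrite Ropp_0.
move=> i a b _ ->; ring. Qed.

Lemma rsum_sub P F G : \big[Rplus/R0]_(i | P i) (F i - G i) = \big[Rplus/R0]_(i | P i) F i - \big[Rplus/R0]_(i | P i) G i.
Proof. rewrite rsum_add rsum_opp; ring. Qed.

Lemma rsum_ext P F G : (forall i, P i -> F i = G i) -> \big[Rplus/R0]_(i | P i) F i = \big[Rplus/R0]_(i | P i) G i.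
Proof. exact: eq_bigr. Qed.

Lemma rsum0 P : \big[Rplus/R0]_(i | P i) 0 = 0.
Proof. by rewrite big1. Qed.

Lemma rsum_const1 P : \big[Rplus/R0]_(i | P i) 1 = INR #|P|.
Proof. rewrite big_const; elim: #|P| => //= m IH. rewrite IH; case: m {IH} => [|m]; simpl; ring. Qed.

Lemma rsum_delta P F j : P j -> \big[Rplus/R0]_(i | P i) (if i == j then F i else 0) = F j.
Proof. move=> Pj; rewrite (bigD1 j) //= eqxx big1 ?Rplus_0_r // => i /andP[_ /negbTE ->] //. Qed.
End Sums.

Lemma rsum_exch (I J : finType) (P : pred I) (Q : pred J) (F : I -> J -> R) :
  \big[Rplus/R0]_(i | P i) \big[Rplus/R0]_(j | Q j) F i j = \big[Rplus/R0]_(j | Q j) \big[Rplus/R0]_(i | P i) F i j.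
Proof. exact: exchange_big. Qed.

Lemma cosZ x (z : Z) : cos (x + 2 * PI * IZR z) = cos x.
Proof.
destruct (Z_le_gt_dec 0 z) as [h|h].
- rewrite -(Z2Nat.id z) // -INR_IZR_INZ.
  rewrite (_ : 2 * PI * INR _ = 2 * INR (Z.to_nat z) * PI); [exact: cos_period|ring].
- have -> : z = (- Z.of_nat (Z.to_nat (- z)))%Z by rewrite Z2Nat.id; lia.
  rewrite opp_IZR -INR_IZR_INZ.
  rewrite -{2}[x](_ : x - 2 * PI * INR (Z.to_nat (-z)) + 2 * INR (Z.to_nat (-z)) * PI = x); last ring.
  rewrite cos_period; f_equal; ring.
Qed.

Lemma sinZ x (z : Z) : sin (x + 2 * PI * IZR z) = sin x.
Proof.
destruct (Z_le_gt_dec 0 z) as [h|h].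
- rewrite -(Z2Nat.id z) // -INR_IZR_INZ.
  rewrite (_ : 2 * PI * INR _ = 2 * INR (Z.to_nat z) * PI); [exact: sin_period|ring].
- have -> : z = (- Z.of_nat (Z.to_nat (- z)))%Z by rewrite Z2Nat.id; lia.
  rewrite opp_IZR -INR_IZR_INZ.
  rewrite -{2}[x](_ : x - 2 * PI * INR (Z.to_nat (-z)) + 2 * INR (Z.to_nat (-z)) * PI = x); last ring.
  rewrite sin_period; f_equal; ring.
Qed.

Section Grid.
Variables (d : nat) (n : 'I_d -> nat).
Hypothesis hn : forall i, (0 < n i)%N.

Lemma le2n i : (2 * n i <= Mb n)%N.
Proof. rewrite /Mb leq_mul2l /=; exact: (leq_bigmax (F := n)). Qed.

Lemma n2pos i : (0 < 2 * n i)%N.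
Proof. by rewrite muln_gt0 hn. Qed.

Lemma shc_lt i p (v : 'I_(Mb n)) : ((if (v < 2 * n i)%N then (v + p) %% (2 * n i) else v) < Mb n)%N.
Proof. case: ifP => _ //; apply: leq_trans (le2n i); exact: ltn_pmod (n2pos i). Qed.
Definition shc i p v : 'I_(Mb n) := Ordinal (shc_lt i p v).
Definition sh (p : 'I_d -> nat) (k : idx n) : idx n := [ffun i => shc i (p i) (k i)].

Lemma refc_lt i (v : 'I_(Mb n)) : ((if (v < 2 * n i)%N then (if v == 0%N :> nat then 0 else 2 * n i - v) else v) < Mb n)%N.
Proof. case: ifP => h //; case: ifP => h0; apply: leq_trans (le2n i).
  exact: n2pos. move: (n2pos i) => h2; move/negbT: h0 h h2; case: (v : nat) => [|m] //=; lia. Qed.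
Definition refc i v : 'I_(Mb n) := Ordinal (refc_lt i v).
Definition refl (k : idx n) : idx n := [ffun i => refc i (k i)].

Lemma in_OmegaP (k : idx n) : reflect (forall i, (k i < 2 * n i)%N) (in_Omega k).
Proof. exact: forallP. Qed.

Lemma shc_inj i p : injective (shc i p).
Proof.
move=> v w /(congr1 val) /=.
case: ifP => hv; case: ifP => hw.
- move=> /eqP; rewrite -/(_ == _ %[mod _]) eqn_modDr => /eqP.
  rewrite !modn_small // => h; exact: val_inj.
- move=> e; move: hw; rewrite -e (ltn_pmod _ (n2pos i)) //.
- move=> e; move: hv; rewrite e (ltn_pmod _ (n2pos i)) //.
- by move=> h; apply: val_inj.
Qed.

Lemma sh_inj p : injective (sh p).
Proof. move=> k l e; apply/ffunP => i; apply: (@shc_inj i (p i)).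
by rewrite -!(ffunE (fun i => shc i (p i) _)) -/(sh p k) -/(sh p l) e. Qed.

Lemma refc_invol i : involutive (refc i).
Proof.
move=> v; apply: val_inj => /=; have := n2pos i.
case h1: (v < 2 * n i)%N; case h2: (v == 0%N :> nat) => /= hp.
all: rewrite ?h1 ?h2 /=.
all: repeat (case: ifP => /= ?); lia.
Qed.

Lemma refl_invol : involutive refl.
Proof. move=> k; apply/ffunP => i; rewrite !ffunE; exact: refc_invol. Qed.

Lemma in_Omega_sh p (k : idx n) : in_Omega (sh p k) = in_Omega k.
Proof. apply/in_OmegaP/in_OmegaP => h i; move: (h i); rewrite ffunE /=.
- by case: ifP => // hk F; rewrite F in hk.
- by move=> hk; rewrite hk /= ltn_pmod // n2pos.
Qed.

Lemma in_Omega_refl (k : idx n) : in_Omega (refl k) = in_Omega k.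
Proof. apply/in_OmegaP/in_OmegaP => h i; move: (h i); rewrite ffunE /=.
- by case: ifP => // hk F; rewrite F in hk.
- move=> hk; rewrite hk /=; have := n2pos i; case: ifP => h0 /=; lia.
Qed.

Lemma sumOmega_sh p F : @sumOmega _ n F = @sumOmega _ n (fun k => F (sh p k)).
Proof. rewrite /sumOmega (reindex_inj (@sh_inj p)); apply: eq_bigl => k; exact: in_Omega_sh. Qed.

Lemma sumOmega_refl F : @sumOmega _ n F = @sumOmega _ n (fun k => F (refl k)).
Proof. rewrite /sumOmega (reindex_inj (can_inj refl_invol)); apply: eq_bigl => k; exact: in_Omega_refl. Qed.

Lemma INRn i : INR (n i) <> 0.
Proof. apply: not_0_INR; move: (hn i); case: (n i) => //. Qed.

Lemma xg_sh p (k : idx n) : in_Omega k -> forall i, exists z : Z,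
  @xg _ n (sh p k) i = @xg _ n k i + xk n p i + 2 * PI * IZR z.
Proof.
move=> /in_OmegaP hk i; rewrite /xg /xk /idxN ffunE /= (hk i).
exists (- Z.of_nat ((k i + p i) %/ (2 * n i)))%Z.
have e := divn_eq (k i + p i) (2 * n i).
have e' : INR (k i + p i) = INR ((k i + p i) %/ (2 * n i)) * (2 * INR (n i)) + INR ((k i + p i) %% (2 * n i)).
  by rewrite {1}e plus_INR mult_INR mult_INR.
rewrite plus_INR in e'.
rewrite opp_IZR -INR_IZR_INZ.
have hn' := @INRn i.
apply: (Rmult_eq_reg_r (INR (n i))) => //.
field_simplify => //.
rewrite (_ : INR ((k i + p i) %% (2 * n i)) = INR (k i) + INR (p i) - INR ((k i + p i) %/ (2 * n i)) * (2 * INR (n i))); last by lra.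
ring.
Qed.

Lemma xg_refl (k : idx n) : in_Omega k -> forall i, exists z : Z,
  @xg _ n (refl k) i = - @xg _ n k i + 2 * PI * IZR z.
Proof.
move=> /in_OmegaP hk i; rewrite /xg /xk /idxN ffunE /= (hk i).
have hn' := @INRn i.
case: ifP => h0.
- exists 0%Z; rewrite (eqP h0) /=; field => //.
- exists 1%Z; rewrite minus_INR ?mult_INR; last by apply/leP; apply: ltnW.
  rewrite /=; field => //.
Qed.

End Grid.

Definition eqv d (y y' : pt d) := forall i, exists z : Z, y i = y' i + 2 * PI * IZR z.

Lemma eqv_ext d (y y' : pt d) : (forall i, y i = y' i) -> eqv y y'.
Proof. move=> h i; exists 0%Z; rewrite h /=; ring. Qed.

Lemma dotZ_per d l (y y' : pt d) : eqv y y' -> exists w : Z, dotZ l y = dotZ l y' + 2 * PI * IZR w.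
Proof.
move=> h; rewrite /dotZ; apply: (big_rec2 (fun a b => exists w : Z, a = b + 2 * PI * IZR w)).
  by exists 0%Z; rewrite /=; ring.
move=> i a b _ [w ->]; have [z ->] := h i; exists (l i * z + w)%Z.
rewrite plus_IZR mult_IZR; ring.
Qed.

Lemma dotZ_lin d l (y w : pt d) al be :
  dotZ l (fun i => al * y i + be * w i) = al * dotZ l y + be * dotZ l w.
Proof.
rewrite /dotZ; apply: (big_rec3 (fun a b c => a = al * b + be * c)); first by ring.
move=> i a b c _ ->; ring.
Qed.

Lemma dotZ_ext d l (y w : pt d) : (forall i, y i = w i) -> dotZ l y = dotZ l w.
Proof. move=> h; apply: eq_bigr => i _; by rewrite h. Qed.

Lemma dotN_Z d j (y : pt d) : dotN j y = dotZ (fun i => Z.of_nat (j i)) y.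
Proof. apply: eq_bigr => i _; by rewrite INR_IZR_INZ. Qed.

Lemma cos_dotZ_per d l (y y' : pt d) : eqv y y' -> cos (dotZ l y) = cos (dotZ l y').
Proof. move=> /(dotZ_per l) [w ->]; exact: cosZ. Qed.
Lemma sin_dotZ_per d l (y y' : pt d) : eqv y y' -> sin (dotZ l y) = sin (dotZ l y').
Proof. move=> /(dotZ_per l) [w ->]; exact: sinZ. Qed.

Lemma dotZ_opp d l (y : pt d) : dotZ l (fun i => - y i) = - dotZ l y.
Proof.
rewrite (dotZ_ext l (w := fun i => (-1) * y i + 0 * y i)); last by move=> i; ring.
rewrite dotZ_lin; ring.
Qed.

Section Kern.
Variables (d : nat) (a : ('I_d -> Z) -> R) (K : pt d -> R).
Hypothesis hK : is_kernel a K.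

Lemma K_per (y y' : pt d) : eqv y y' -> K y = K y'.
Proof.
move=> h; have [_ [_ hc]] := hK.
have e : (fun M => boxsum M (fun l => a l * cos (dotZ l y))) = (fun M => boxsum M (fun l => a l * cos (dotZ l y'))).
  apply: functional_extensionality => M; apply: eq_bigr => t _; by rewrite (cos_dotZ_per _ h).
apply: (UL_sequence _ _ _ (hc y)); rewrite e; exact: hc y'.
Qed.

Lemma K_even (y : pt d) : K (fun i => - y i) = K y.
Proof.
have [_ [_ hc]] := hK.
have e : (fun M => boxsum M (fun l => a l * cos (dotZ l (fun i => - y i)))) = (fun M => boxsum M (fun l => a l * cos (dotZ l y))).
  apply: functional_extensionality => M; apply: eq_bigr => t _; by rewrite dotZ_opp cos_neg.
apply: (UL_sequence _ _ _ (hc _)); rewrite e; exact: hc y.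
Qed.
End Kern.

Lemma cos_lt1 x : 0 < Rabs x < 2 * PI -> cos x < 1.
Proof.
move=> h.
have e : cos x = cos (Rabs x) by case: (Rcase_abs x) => hx; rewrite /Rabs; case: Rcase_abs => //; rewrite cos_neg.
rewrite e (_ : Rabs x = 2 * (Rabs x / 2)); last by field.
rewrite cos_2a_sin.
have : 0 < sin (Rabs x / 2) by apply: sin_gt_0; lra.
nra.
Qed.

Section Orth.
Variables (d : nat) (n : 'I_d -> nat).
Hypothesis hn : forall i, (0 < n i)%N.
Local Notation SO := (@sumOmega d n).

Definition unitv (i : 'I_d) : 'I_d -> nat := fun l => if l == i then 1%N else 0%N.

Lemma dotZ_unit z i : dotZ z (xk n (unitv i)) = IZR (z i) * PI / INR (n i).
Proof.
rewrite /dotZ (bigD1 i) //= big1 ?Rplus_0_r.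
  rewrite /xk /unitv eqxx /=; field; exact: (INRn hn).
move=> l /negbTE hl; rewrite /xk /unitv hl /=; field; exact: (INRn hn).
Qed.

Lemma SO_cos_shift (u : idx n -> R) al :
  SO (fun m => cos (u m + al)) = cos al * SO (fun m => cos (u m)) - sin al * SO (fun m => sin (u m)).
Proof.
rewrite /sumOmega -!rsum_scal -rsum_sub; apply: eq_bigr => m _; rewrite cos_plus; ring.
Qed.
Lemma SO_sin_shift (u : idx n -> R) al :
  SO (fun m => sin (u m + al)) = sin al * SO (fun m => cos (u m)) + cos al * SO (fun m => sin (u m)).
Proof.
rewrite /sumOmega -!rsum_scal -rsum_add; apply: eq_bigr => m _; rewrite sin_plus; ring.
Qed.

Lemma cos_mod a b : (exists w : Z, a = b + 2 * PI * IZR w) -> cos a = cos b.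
Proof. by move=> [w ->]; rewrite cosZ. Qed.
Lemma sin_mod a b : (exists w : Z, a = b + 2 * PI * IZR w) -> sin a = sin b.
Proof. by move=> [w ->]; rewrite sinZ. Qed.

Lemma dotZ_sh z p (m : idx n) : in_Omega m -> exists w : Z,
  dotZ z (xg (sh hn p m)) = dotZ z (xg m) + dotZ z (xk n p) + 2 * PI * IZR w.
Proof.
move=> hm.
have hE : eqv (xg (sh hn p m)) (fun l => 1 * xg m l + 1 * xk n p l).
  move=> l; have [w ->] := xg_sh hn p hm l; exists w; ring.
have [w ->] := dotZ_per z hE; exists w; rewrite dotZ_lin; ring.
Qed.

Lemma orth z i be : (z i <> 0)%Z -> (- Z.of_nat (2 * n i) < z i < Z.of_nat (2 * n i))%Z ->
  SO (fun m => cos (dotZ z (xg m) + be)) = 0.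
Proof.
move=> hz hb.
set al := dotZ z (xk n (unitv i)).
have hC : SO (fun m => cos (dotZ z (xg m) + be)) = cos al * SO (fun m => cos (dotZ z (xg m) + be)) - sin al * SO (fun m => sin (dotZ z (xg m) + be)).
  rewrite -(SO_cos_shift (fun m => dotZ z (xg m) + be)) {1}(sumOmega_sh hn (unitv i)) /sumOmega.
  apply: eq_bigr => m hm; apply: cos_mod.
  have [w ->] := dotZ_sh z (unitv i) hm; exists w; rewrite /al; ring.
have hS : SO (fun m => sin (dotZ z (xg m) + be)) = sin al * SO (fun m => cos (dotZ z (xg m) + be)) + cos al * SO (fun m => sin (dotZ z (xg m) + be)).
  rewrite -(SO_sin_shift (fun m => dotZ z (xg m) + be)) {1}(sumOmega_sh hn (unitv i)) /sumOmega.
  apply: eq_bigr => m hm; apply: sin_mod.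
  have [w ->] := dotZ_sh z (unitv i) hm; exists w; rewrite /al; ring.
move: hC hS.
set C := SO (fun m => cos (dotZ z (xg m) + be)).
set S := SO (fun m => sin (dotZ z (xg m) + be)).
move=> hC hS.
have hc : cos al < 1.
  apply: cos_lt1; rewrite /al dotZ_unit.
  have hn' : 0 < INR (n i) by apply: lt_0_INR; apply/ltP; exact: hn.
  have hz' : 0 < Rabs (IZR (z i)) by apply: Rabs_pos_lt; apply: not_0_IZR.
  have hzb : Rabs (IZR (z i)) < 2 * INR (n i).
    rewrite (_ : 2 * INR (n i) = IZR (Z.of_nat (2 * n i))); last by rewrite -INR_IZR_INZ mult_INR.
    apply: Rabs_def1; [apply: IZR_lt; lia | rewrite -opp_IZR; apply: IZR_lt; lia].
  have hpi := PI_RGT_0.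
  rewrite /Rdiv (Rabs_mult (IZR (z i) * PI)) (Rabs_mult (IZR (z i))) Rabs_inv (Rabs_right PI) ?(Rabs_right (INR (n i))); try lra.
  have e : Rabs (IZR (z i)) * PI * / INR (n i) = (Rabs (IZR (z i)) / INR (n i)) * PI by field; lra.
  rewrite e; have h1 : 0 < Rabs (IZR (z i)) / INR (n i) by apply: Rdiv_lt_0_compat.
  have h2 : Rabs (IZR (z i)) / INR (n i) < 2.
    apply: (Rmult_lt_reg_r (INR (n i))) => //; rewrite /Rdiv Rmult_assoc Rinv_l; lra.
  split; nra.
have hsc := sin2_cos2 al.
have e1 : (1 - cos al) * C = - sin al * S by lra.
have e2 : (1 - cos al) * S = sin al * C by lra.
have e3 : ((1 - cos al) * (1 - cos al) + sin al * sin al) * C = 0.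
  have : (1 - cos al) * ((1 - cos al) * C) = - sin al * ((1 - cos al) * S) by rewrite e1; ring.
  rewrite e2; rewrite /Rsqr in hsc; nra.
case: (Rmult_integral _ _ e3) => // h.
rewrite /Rsqr in hsc; nra.
Qed.
End Orth.

Section Card.
Variables (d : nat) (n : 'I_d -> nat).
Hypothesis hn : forall i, (0 < n i)%N.
Local Notation SO := (@sumOmega d n).

Lemma widen_inj' (m M : nat) (h : (m <= M)%N) : injective (widen_ord h).
Proof. move=> x y /(congr1 val) /= e; exact: val_inj. Qed.

Lemma card_lt (M m : nat) (h : (m <= M)%N) : #|[pred v : 'I_M | (v < m)%N]| = m.
Proof.
rewrite -{2}(card_ord m) -(card_image (@widen_inj' m M h) 'I_m).
apply: eq_card => v; rewrite !inE; apply/idP/imageP.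
- move=> hv; exists (Ordinal hv) => //; exact: val_inj.
- by move=> [w _ ->] /=.
Qed.

Lemma card_Omega : #|[pred k : idx n | in_Omega k]| = (2 ^ d * \prod_(i < d) n i)%N.
Proof.
have -> : #|[pred k : idx n | in_Omega k]| = #|family (fun i => [pred v : 'I_(Mb n) | (v < 2 * n i)%N])|.
  by apply: eq_card => k; rewrite !inE.
rewrite card_family foldrE big_map big_enum /=.
rewrite (eq_bigr (fun i => 2 * n i)%N); last by move=> i _; rewrite card_lt // le2n.
rewrite big_split /= prod_nat_const card_ord //.
Qed.

Lemma SO_one : SO (fun _ => 1) = Nn n.
Proof. rewrite /sumOmega rsum_const1 /Nn -card_Omega; done. Qed.

Lemma Nn_pos : 0 < Nn n.
Proof. rewrite /Nn; apply: lt_0_INR; apply/ltP; rewrite muln_gt0 expn_gt0 /=; exact: prodn_gt0. Qed.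

Lemma Mb_pos (i : 'I_d) : (0 < Mb n)%N.
Proof. exact: leq_trans (n2pos hn i) (le2n n i). Qed.

Definition zeroI : idx n := [ffun i => Ordinal (Mb_pos i)].

Lemma zero_Omega : in_Omega zeroI.
Proof. apply/forallP => i; rewrite ffunE /=; exact: n2pos. Qed.

Lemma SO_split0 F : SO F = F zeroI + sumOmega_star F.
Proof.
rewrite /sumOmega /sumOmega_star (bigD1 zeroI) ?zero_Omega //; congr (_ + _).
apply: eq_bigl => k; rewrite /in_Omega_star; congr (_ && _).
case: (boolP [exists i, nat_of_ord (k i) != 0%N]) => h.
- apply/eqP => e; move: h => /existsP [i]; by rewrite e ffunE.
- apply/negbTE/negPn/eqP/ffunP => i; apply: val_inj; rewrite ffunE /=.
  by move: h => /existsPn /(_ i) /negPn /eqP.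
Qed.
End Card.

Section Main.
Variables (d : nat) (n : 'I_d -> nat) (a : ('I_d -> Z) -> R) (K : pt d -> R).
Hypothesis hn : forall i, (0 < n i)%N.
Hypothesis hK : is_kernel a K.
Local Notation SO := (@sumOmega d n).
Local Notation SOs := (@sumOmega_star d n).
Local Notation N := (Nn n).

Lemma cos_dotN_eqv j (y y' : pt d) : eqv y y' -> cos (dotN j y) = cos (dotN j y').
Proof. rewrite !dotN_Z; exact: cos_dotZ_per. Qed.
Lemma sin_dotN_eqv j (y y' : pt d) : eqv y y' -> sin (dotN j y) = sin (dotN j y').
Proof. rewrite !dotN_Z; exact: sin_dotZ_per. Qed.
Lemma dotN_lin j (y w : pt d) al be :
  dotN j (fun i => al * y i + be * w i) = al * dotN j y + be * dotN j w.
Proof. rewrite !dotN_Z; exact: dotZ_lin. Qed.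
Lemma dotN_ext j (y w : pt d) : (forall i, y i = w i) -> dotN j y = dotN j w.
Proof. rewrite !dotN_Z; exact: dotZ_ext. Qed.

Lemma xg_sh' (q m : idx n) : in_Omega m -> forall l, exists w : Z,
  xg (sh hn (idxN q) m) l = xg m l + xg q l + 2 * PI * IZR w.
Proof. move=> hm l; exact: (xg_sh hn (idxN q) hm l). Qed.

Lemma rho_shift j x (k : idx n) : in_Omega k ->
  rho n K j (ptsub x (xg k)) = 2 / N * SO (fun m => cos (dotN j (ptsub (xg m) (xg k))) * K (ptsub x (xg m))).
Proof.
move=> hk; rewrite /rho; congr (_ * _).
rewrite [RHS](sumOmega_sh hn (idxN k)) /sumOmega; apply: eq_bigr => m hm.
have hE := xg_sh' k hm.
congr (_ * _).
- apply: cos_dotN_eqv => l; have [w e] := hE l; exists (- w)%Z; rewrite /ptsub e opp_IZR; ring.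
- apply: (K_per hK) => l; have [w e] := hE l; exists w; rewrite /ptsub e; ring.
Qed.

Lemma sin_K_zero j : SO (fun p => sin (dotN j (xg p)) * K (xg p)) = 0.
Proof.
have e : SO (fun p => sin (dotN j (xg p)) * K (xg p)) = - SO (fun p => sin (dotN j (xg p)) * K (xg p)).
  rewrite {1}(sumOmega_refl hn) /sumOmega -rsum_opp; apply: eq_bigr => p hp.
  have hE : eqv (xg (refl hn p)) (fun l => - xg p l).
    move=> l; have [w ->] := xg_refl hn hp l; by exists w.
  rewrite (sin_dotN_eqv _ hE) (K_per hK hE) (K_even hK) (dotN_ext j (w := fun l => (-1) * xg p l + 0 * xg p l)).
    rewrite dotN_lin (_ : -1 * dotN j (xg p) + 0 * dotN j (xg p) = - dotN j (xg p)); last ring.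
    rewrite sin_neg; ring.
  move=> l; ring.
lra.
Qed.

Lemma rho_at0 j : rho n K j (@pt0 d) = 2 / N * SO (fun p => cos (dotN j (xg p)) * K (xg p)).
Proof.
rewrite /rho; congr (_ * _); apply: eq_bigr => p _; congr (_ * _).
rewrite (K_per hK (y' := fun l => - xg p l)) ?(K_even hK) //.
apply: eqv_ext => l; rewrite /ptsub /pt0; ring.
Qed.

Lemma rho_grid j (q k : idx n) : in_Omega q -> in_Omega k ->
  rho n K j (ptsub (xg q) (xg k)) = cos (dotN j (ptsub (xg q) (xg k))) * rho n K j (@pt0 d).
Proof.
move=> hq hk; rewrite rho_shift // rho_at0.
set A := dotN j (ptsub (xg q) (xg k)).
have -> : SO (fun m => cos (dotN j (ptsub (xg m) (xg k))) * K (ptsub (xg q) (xg m)))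
   = cos A * SO (fun p => cos (dotN j (xg p)) * K (xg p)) + sin A * SO (fun p => sin (dotN j (xg p)) * K (xg p)).
  rewrite (sumOmega_sh hn (idxN q)) (sumOmega_refl hn) /sumOmega -!rsum_scal -rsum_add.
  apply: eq_bigr => m hm.
  have hrm : in_Omega (refl hn m) by rewrite in_Omega_refl.
  have hE : forall l, exists w : Z, xg (sh hn (idxN q) (refl hn m)) l = - xg m l + xg q l + 2 * PI * IZR w.
    move=> l; have [w1 e1] := xg_sh' q hrm l; have [w2 e2] := xg_refl hn hm l.
    exists (w1 + w2)%Z; rewrite e1 e2 plus_IZR; ring.
  rewrite (K_per hK (y' := xg m)); last first.
    move=> l; have [w e] := hE l; exists (- w)%Z; rewrite /ptsub e opp_IZR; ring.
  rewrite (cos_dotN_eqv j (y' := fun l => 1 * (xg q l - xg k l) + (-1) * xg m l)); last first.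
    move=> l; have [w e] := hE l; exists w; rewrite /ptsub e; ring.
  rewrite dotN_lin (dotN_ext j (w := ptsub (xg q) (xg k))) -/A; last by move=> l.
  rewrite (_ : 1 * A + -1 * dotN j (xg m) = A - dotN j (xg m)); last ring.
  rewrite cos_minus; ring.
rewrite sin_K_zero; ring.
Qed.

Lemma dotN_zero (y : pt d) : dotN (idxN (zeroI hn)) y = 0.
Proof. rewrite /dotN big1 // => i _; rewrite /idxN ffunE /=; ring. Qed.

Hypothesis hrho : forall j : idx n, in_Omega_star j -> rho n K (idxN j) (@pt0 d) <> 0.

Lemma fund_grid (q k : idx n) : in_Omega q -> in_Omega k ->
  sk_fund n K (ptsub (xg q) (xg k)) = if q == k then 1 else 0.
Proof.
move=> hq hk; rewrite /sk_fund.
rewrite (_ : SOs (fun j => rho n K (idxN j) (ptsub (xg q) (xg k)) / rho n K (idxN j) (@pt0 d))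
           = SOs (fun j => cos (dotN (idxN j) (ptsub (xg q) (xg k))))); last first.
  apply: eq_bigr => j hj; rewrite rho_grid //; field; exact: hrho.
have hN := Nn_pos hn.
have -> : 1 / N + 1 / N * SOs (fun j => cos (dotN (idxN j) (ptsub (xg q) (xg k))))
   = 1 / N * SO (fun j => cos (dotN (idxN j) (ptsub (xg q) (xg k)))).
  rewrite (SO_split0 hn) dotN_zero cos_0; ring.
case: eqP => [->|hne].
- rewrite (_ : SO _ = SO (fun _ => 1)); last first.
    apply: eq_bigr => j _; rewrite (dotN_ext _ (w := fun l => 0 * xg k l + 0 * xg k l)).
      by rewrite dotN_lin Rmult_0_l Rplus_0_l cos_0.
    move=> l; rewrite /ptsub; ring.
  rewrite SO_one; field; lra.
- have [i hi] : exists i, q i != k i.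
    case: (boolP [exists i, q i != k i]) => [/existsP //|/existsPn h].
    exfalso; apply: hne; apply/ffunP => i; exact/eqP/negPn/h.
  set z := fun l => (Z.of_nat (idxN q l) - Z.of_nat (idxN k l))%Z.
  rewrite (_ : SO _ = SO (fun j => cos (dotZ z (xg j) + 0))); last first.
    apply: eq_bigr => j _; congr cos; rewrite Rplus_0_r; apply: eq_bigr => l _.
    rewrite /z minus_IZR -!INR_IZR_INZ /ptsub /xg /xk; field; exact: (INRn hn).
  rewrite (orth hn (i := i)); first by ring.
  + rewrite /z /idxN; move: hi; move/eqP => hi h; apply: hi; apply: val_inj; change (nat_of_ord (q i) = nat_of_ord (k i)); lia.
  + move: hq hk => /in_OmegaP /(_ i) hq /in_OmegaP /(_ i) hk.
    rewrite /z /idxN; lia.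
Qed.

Definition ecoef (k m : idx n) : R :=
  1 / N * SOs (fun j => 2 / N * cos (dotN (idxN j) (ptsub (xg m) (xg k))) / rho n K (idxN j) (@pt0 d)).

Lemma rsum_scal_r (I : finType) (P : pred I) (F : I -> R) c :
  \big[Rplus/R0]_(i | P i) (F i * c) = (\big[Rplus/R0]_(i | P i) F i) * c.
Proof. rewrite Rmult_comm -rsum_scal; apply: eq_bigr => i _; ring. Qed.

Lemma fund_spline (k : idx n) x : in_Omega k ->
  sk_fund n K (ptsub x (xg k)) = 1 / N + SO (fun m => ecoef k m * K (ptsub x (xg m))).
Proof.
move=> hk; rewrite /sk_fund; congr (_ + _).
transitivity (1 / N * SOs (fun j => SO (fun m => (2 / N * cos (dotN (idxN j) (ptsub (xg m) (xg k))) / rho n K (idxN j) (@pt0 d)) * K (ptsub x (xg m))))).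
  congr (_ * _); apply: eq_bigr => j _; rewrite rho_shift // /sumOmega.
  rewrite [RHS](eq_bigr (fun m => (2 / N / rho n K (idxN j) (@pt0 d)) * (cos (dotN (idxN j) (ptsub (xg m) (xg k))) * K (ptsub x (xg m))))); last by move=> m _; rewrite /Rdiv; ring.
  rewrite rsum_scal /Rdiv; ring.
rewrite /sumOmega /sumOmega_star rsum_exch -rsum_scal; apply: eq_bigr => m _.
rewrite /ecoef /sumOmega_star Rmult_assoc -rsum_scal_r; ring.
Qed.

Lemma ecoef_sum (k : idx n) : in_Omega k -> SO (ecoef k) = 0.
Proof.
move=> hk; rewrite /sumOmega /ecoef rsum_scal /sumOmega_star rsum_exch.
rewrite big1 ?Rmult_0_r // => j hj.
rewrite (eq_bigr (fun m => (2 / N / rho n K (idxN j) (@pt0 d)) * cos (dotZ (fun l => Z.of_nat (idxN j l)) (xg m) + (- dotN (idxN j) (xg k))))); last first.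
  move=> m _; rewrite (dotN_ext _ (w := fun l => 1 * xg m l + (-1) * xg k l)); last by move=> l; rewrite /ptsub; ring.
  rewrite dotN_lin (dotN_Z (idxN j) (xg m)) Rmult_1_l (_ : forall u : R, -1 * u = - u); first by rewrite /Rdiv; ring.
  move=> u; ring.
rewrite rsum_scal.
move: hj; rewrite /in_Omega_star => /andP [hj /existsP [i hi]].
move: hj => /in_OmegaP /(_ i) hj.
have ho := @orth d n hn (fun l => Z.of_nat (idxN j l)) i (- dotN (idxN j) (xg k)).
rewrite /sumOmega in ho; rewrite ho; first by ring.
- rewrite /idxN; move: hi => /eqP hi h; apply: hi; lia.
- rewrite /idxN; lia.
Qed.

Lemma interp_spline f : is_sk_spline n K (sk_interp n K f).
Proof.
exists (SO (fun k => f (xg k)) / N), (fun m => SO (fun k => f (xg k) * ecoef k m)).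
split.
- rewrite /sumOmega rsum_exch big1 // => k hk; rewrite rsum_scal.
  have := ecoef_sum hk; rewrite /sumOmega => ->; ring.
- move=> x; rewrite /sk_interp.
  transitivity (SO (fun k => f (xg k) / N + SO (fun m => (f (xg k) * ecoef k m) * K (ptsub x (xg m))))).
    apply: eq_bigr => k hk; rewrite fund_spline // Rmult_plus_distr_l /sumOmega -rsum_scal.
    congr (_ + _); first by rewrite /Rdiv; ring.
    apply: eq_bigr => m _; ring.
  rewrite /sumOmega rsum_add; congr (_ + _).
    rewrite /Rdiv rsum_scal_r //.
  rewrite rsum_exch; apply: eq_bigr => m _; by rewrite rsum_scal_r.
Qed.

Lemma interp_vals f (q : idx n) : in_Omega q -> sk_interp n K f (xg q) = f (xg q).
Proof.
move=> hq; rewrite /sk_interp /sumOmega.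
rewrite (eq_bigr (fun k => if k == q then f (xg k) else 0)); first by rewrite rsum_delta.
move=> k hk; rewrite fund_grid // eq_sym; case: eqP => _; ring.
Qed.

Lemma spline_sub s1 s2 : is_sk_spline n K s1 -> is_sk_spline n K s2 -> is_sk_spline n K (fun x => s1 x - s2 x).
Proof.
move=> [c1 [ck1 [h1 e1]]] [c2 [ck2 [h2 e2]]].
exists (c1 - c2), (fun k => ck1 k - ck2 k); split.
- by rewrite /sumOmega rsum_sub -/(SO ck1) -/(SO ck2) h1 h2 Rminus_0_r.
- move=> x; rewrite e1 e2.
  have -> : SO (fun k => (ck1 k - ck2 k) * K (ptsub x (xg k))) = SO (fun k => ck1 k * K (ptsub x (xg k))) - SO (fun k => ck2 k * K (ptsub x (xg k))).
    rewrite /sumOmega -rsum_sub; apply: eq_bigr => k _; ring.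
  ring.
Qed.

Lemma spline_zero s : is_sk_spline n K s -> (forall q : idx n, in_Omega q -> s (xg q) = 0) -> forall x, s x = 0.
Proof.
move=> [c [ck [hsum hs]]] hz.
have hck : forall p : idx n, in_Omega p -> ck p = 0.
  move=> p hp.
  have h0 : SO (fun q => ecoef p q * s (xg q)) = 0.
    rewrite /sumOmega big1 // => q hq; rewrite hz //; ring.
  rewrite -h0.
  transitivity (c * SO (ecoef p) + SO (fun k => ck k * SO (fun q => ecoef p q * K (ptsub (xg q) (xg k))))); last first.
    symmetry; rewrite /sumOmega.
    transitivity (\big[Rplus/R0]_(q | in_Omega q) (c * ecoef p q + \big[Rplus/R0]_(k | in_Omega k) (ck k * (ecoef p q * K (ptsub (xg q) (xg k)))))).
      apply: eq_bigr => q hq; rewrite hs /sumOmega Rmult_plus_distr_l -rsum_scal; congr (_ + _); first ring.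
      apply: eq_bigr => k _; ring.
    rewrite rsum_add -rsum_scal; congr (_ + _); rewrite rsum_exch; apply: eq_bigr => k _; by rewrite rsum_scal.
  rewrite ecoef_sum // Rmult_0_r Rplus_0_l.
  transitivity (SO (fun k => (if k == p then ck k else 0) - 1 / N * ck k)).
    rewrite /sumOmega rsum_sub rsum_delta // rsum_scal; have := hsum; rewrite /sumOmega => ->; ring.
  rewrite /sumOmega; apply: eq_bigr => k hk.
  have e1 := fund_spline (xg k) hp; rewrite fund_grid // in e1.
  have e2 : SO (fun q => ecoef p q * K (ptsub (xg k) (xg q))) = SO (fun q => ecoef p q * K (ptsub (xg q) (xg k))).
    apply: eq_bigr => q _; congr (_ * _).
    rewrite -(K_even hK); apply: (K_per hK); apply: eqv_ext => l; rewrite /ptsub; ring.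
  rewrite /sumOmega in e1 e2; rewrite -e2.
  have -> : \big[Rplus/R0]_(q | in_Omega q) (ecoef p q * K (ptsub (xg k) (xg q))) = (if k == p then 1 else 0) - 1 / N by rewrite e1; ring.
  case: eqP => [->|_]; ring.
have hc : c = 0.
  have := hz _ (zero_Omega hn); rewrite hs.
  rewrite /sumOmega big1 ?Rplus_0_r // => k hk; rewrite hck //; ring.
move=> x; rewrite hs hc /sumOmega big1 ?Rplus_0_r // => k hk; rewrite hck //; ring.
Qed.

End Main.

Theorem theorem4p5 (d : nat) (n : 'I_d -> nat) (a : ('I_d -> Z) -> R) (K : pt d -> R) :
  (forall i, (0 < n i)%N) ->
  is_kernel a K ->
  (forall j : idx n, in_Omega_star j -> rho n K (idxN j) (@pt0 d) <> 0) ->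
  forall f : pt d -> R,
    (exists! s : pt d -> R,
        is_sk_spline n K s /\ (forall j : idx n, in_Omega j -> s (xg j) = f (xg j))) /\
    (forall s : pt d -> R,
        is_sk_spline n K s -> (forall j : idx n, in_Omega j -> s (xg j) = f (xg j)) ->
        forall x, s x = sk_interp n K f x).
Proof.
move=> hn hK hrho f.
have key : forall s, is_sk_spline n K s -> (forall j : idx n, in_Omega j -> s (xg j) = f (xg j)) ->
    forall x, s x = sk_interp n K f x.
  move=> s hs hv x.
  have hd := spline_sub hs (interp_spline hn hK f).
  apply: Rminus_diag_uniq; apply: (spline_zero hn hK hrho hd) => q hq.
  rewrite hv // (interp_vals hn hK hrho) //; ring.
split; last exact: key.
exists (sk_interp n K f); split.
  split; first exact: interp_spline hn hK f.
  move=> j hj; exact: (interp_vals hn hK hrho).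
move=> s [hs hv]; apply: functional_extensionality => x; symmetry; exact: key.
Qed.
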